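(* The variety $Z_{Horn}$ is the vanishing locus (in $W$) of the polynomial $s(X)=\det(H\circ X)$, where $\circ$ denotes the Hadamard (entrywise) product.
   Context: $H$ is the Horn matrix \[H=\begin{pmatrix} 1 & -1 &1& 1& -1 \\ -1 & 1& -1 &1& 1\\ 1 & -1 & 1 & -1 & 1\\ 1 & 1& -1&1& -1\\ -1&1&1&-1&1\end{pmatrix}.\] $W$ is the space of $5\times 5$ matrices of the form \[X=\begin{pmatrix} y_{11}& 0&0& y_{41}& y_{51} \\ y_{12} & y_{22}& 0 &0& y_{52}\\ y_{13 }& y_{23}& y_{33} & 0& 0\\ 0 & y_{24}& y_{34}&y_{44}& 0\\ 0&0&y_{35}&y_{45}& y_{55}\end{pmatrix}.\] $Z_{Horn}\subset W$ is the set of all matrices $DB$ where $D$ is a diagonal matrix with positive diagonal entries and \[B = \begin{pmatrix} 1& 0&0& y_4& y_5+1 \\ y_1+1 & 1& 0 &0& y_5\\ y_1 & y_2+1 & 1 & 0& 0\\ 0 & y_2& y_3+1&1& 0\\ 0&0&y_3&y_4+1&1\end{pmatrix}\operatorname{diag}(z_1,\dots,z_5)\] with $y_1,\dots,y_5,z_1,\dots,z_5$ positive reals; it is regarded as a hypersurface (variety) in $W$. *)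

(* Defs.v *)
From HB Require Import structures.
From mathcomp Require Import all_boot all_order all_algebra.
From mathcomp Require Import reals.
From mathcomp Require Import mpoly.
Set Implicit Arguments. Unset Strict Implicit. Unset Printing Implicit Defensive.
Import Order.TTheory GRing.Theory Num.Theory.
Local Open Scope ring_scope.

(* Indices 1..5 of the paper are 'I_5 = {0,..,4} here. *)

Definition Horn {R : ringType} : 'M[R]_5 :=
  \matrix_(i < 5, j < 5)
   match nat_of_ord i, nat_of_ord j with
   | 0, 0 => 1 | 0, 1 => -1 | 0, 2 => 1 | 0, 3 => 1 | 0, _ => -1
   | 1, 0 => -1 | 1, 1 => 1 | 1, 2 => -1 | 1, 3 => 1 | 1, _ => 1
   | 2, 0 => 1 | 2, 1 => -1 | 2, 2 => 1 | 2, 3 => -1 | 2, _ => 1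
   | 3, 0 => 1 | 3, 1 => 1 | 3, 2 => -1 | 3, 3 => 1 | 3, _ => -1
   | _, 0 => -1 | _, 1 => 1 | _, 2 => 1 | _, 3 => -1 | _, _ => 1
   end.

(* Zero pattern of W: entry (i,j) is forced to be 0 iff j = i+1 or j = i+2 (mod 5).
   Row 1: cols 2,3; row 2: cols 3,4; row 3: cols 4,5; row 4: cols 5,1; row 5: cols 1,2. *)
Definition W_zero (i j : 'I_5) : bool :=
  ((j + 5 - i) %% 5 == 1)%N || ((j + 5 - i) %% 5 == 2)%N.

Definition inW {R : ringType} (X : 'M[R]_5) : Prop :=
  forall i j : 'I_5, W_zero i j -> X i j = 0.

(* The matrix B(y) (before right multiplication by diag(z)); y k stands for y_{k+1}. *)
Definition B0 {R : ringType} (y : 'I_5 -> R) : 'M[R]_5 :=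
  let y1 := y 0%R in let y2 := y 1%R in let y3 := y 2%R in
  let y4 := y 3%R in let y5 := y 4%R in
  \matrix_(i < 5, j < 5)
   match nat_of_ord i, nat_of_ord j with
   | 0, 0 => 1 | 0, 3 => y4 | 0, 4 => y5 + 1
   | 1, 0 => y1 + 1 | 1, 1 => 1 | 1, 4 => y5
   | 2, 0 => y1 | 2, 1 => y2 + 1 | 2, 2 => 1
   | 3, 1 => y2 | 3, 2 => y3 + 1 | 3, 3 => 1
   | 4, 2 => y3 | 4, 3 => y4 + 1 | 4, 4 => 1
   | _, _ => 0
   end.

Definition diagv {R : ringType} (d : 'I_5 -> R) : 'M[R]_5 := diag_mx (\row_i d i).

Definition Z_Horn {R : realType} (X : 'M[R]_5) : Prop :=
  exists (d y z : 'I_5 -> R),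
    [/\ forall i, 0 < d i, forall i, 0 < y i, forall i, 0 < z i &
        X = diagv d *m B0 y *m diagv z].

Definition hadamard {R : ringType} (A B : 'M[R]_5) : 'M[R]_5 :=
  \matrix_(i, j) (A i j * B i j).

Definition s_Horn {R : comRingType} (X : 'M[R]_5) : R := \det (hadamard Horn X).

(* Polynomial functions on 5x5 matrices: multivariate polynomials in the 25
   entries, evaluated at the vectorized matrix.  Polynomial functions on W are
   exactly restrictions of these. *)
Definition mx_eval {R : comRingType} (p : {mpoly R[5 * 5]}) (X : 'M[R]_5) : R :=
  p.@[fun k => mxvec X 0 k].

Definition zariski_closure_in_W {R : comRingType} (S : 'M[R]_5 -> Prop)
    (X : 'M[R]_5) : Prop :=
  inW X /\ forall p : {mpoly R[5 * 5]},
    (forall Y, S Y -> mx_eval p Y = 0) -> mx_eval p X = 0.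

(* Main.v *)
Require Import Defs.
From HB Require Import structures.
From mathcomp Require Import all_boot all_order all_algebra.
From mathcomp Require Import reals.
From mathcomp Require Import mpoly.
From mathcomp Require Import ring lra.
Set Implicit Arguments. Unset Strict Implicit. Unset Printing Implicit Defensive.
Import Order.TTheory GRing.Theory Num.Theory.
Local Open Scope ring_scope.

Definition Mk {R : nzRingType} (c0 c1 c2 : 'I_5 -> R) : 'M[R]_5 :=
  \matrix_(i, j) (if i == j then c0 j else if i == j + 1 then c1 j
                  else if i == j + 2 then c2 j else 0).

Definition colv {R : nzRingType} (u c0 c1 c2 : 'I_5 -> R) (j : 'I_5) : R :=
  u j * c0 j - u (j + 1) * c1 j + u (j + 2) * c2 j.

Lemma inW_Mk {R : nzRingType} (X : 'M[R]_5) : inW X ->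
  X = Mk (fun j => X j j) (fun j => X (j+1) j) (fun j => X (j+2) j).
Proof.
move=> hW; apply/matrixP => i j; rewrite mxE.
have := hW i j.
case: i => [[|[|[|[|[|?]]]]] ?] //; case: j => [[|[|[|[|[|?]]]]] ?] //.
all: rewrite /W_zero /=.
all: try (move=> h; by apply: h).
all: move=> _; congr (X _ _); apply: val_inj => //.
Qed.

Ltac normg g := repeat match goal with |- context [g ?n] =>
  let m := eval vm_compute in n in progress change n with m end.

Lemma colMk {R : comNzRingType} (v : 'rV[R]_5) c0 c1 c2 j :
  (v *m hadamard Horn (Mk c0 c1 c2)) 0 j = colv (fun i => v 0 i) c0 c1 c2 j.
Proof.
have [g hg] : exists g : nat -> R, forall o : 'I_5, v 0 o = g o.
  by exists (fun k => v 0 (inord k)) => o; rewrite inord_val.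
rewrite mxE !big_ord_recr big_ord0 /= /hadamard !mxE /colv !hg.
case: j => [[|[|[|[|[|?]]]]] ?] //=.
all: normg g; ring.
Qed.

Definition Phi {R : comNzRingType} (d y z : 'I_5 -> R) : 'M[R]_5 :=
  diagv d *m B0 y *m diagv z.

Lemma PhiMk {R : comNzRingType} (d y z : 'I_5 -> R) :
  Phi d y z = Mk (fun j => d j * z j) (fun j => d (j+1) * (y j + 1) * z j)
                 (fun j => d (j+2) * y j * z j).
Proof.
have [gd hd] : exists g : nat -> R, forall o : 'I_5, d o = g o.
  by exists (fun k => d (inord k)) => o; rewrite inord_val.
have [gy hy] : exists g : nat -> R, forall o : 'I_5, y o = g o.
  by exists (fun k => y (inord k)) => o; rewrite inord_val.
have [gz hz] : exists g : nat -> R, forall o : 'I_5, z o = g o.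
  by exists (fun k => z (inord k)) => o; rewrite inord_val.
apply/matrixP => i j; rewrite /Phi /diagv mul_mx_diag mxE mul_diag_mx !mxE /B0.
rewrite !hd !hy !hz.
case: i => [[|[|[|[|[|?]]]]] ?] //; case: j => [[|[|[|[|[|?]]]]] ?] //=.
all: normg gd; normg gy; normg gz; ring.
Qed.

Lemma I5_cases (k : 'I_5) : k = 0 \/ k = 1 \/ k = 2 \/ k = 3 \/ k = 4.
Proof.
case: k => [[|[|[|[|[|?]]]]] ?] //.
by left; apply/val_inj.
by right; left; apply/val_inj.
by right; right; left; apply/val_inj.
by right; right; right; left; apply/val_inj.
by right; right; right; right; apply/val_inj.
Qed.
Lemma cover5 (j i : 'I_5) : exists k : 'I_5, i = j + k.
Proof. by exists (i - j); rewrite addrC subrK. Qed.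
Lemma e11 : (1 + 1 = 2 :> 'I_5). Proof. by apply/val_inj. Qed.
Lemma e12 : (1 + 2 = 3 :> 'I_5). Proof. by apply/val_inj. Qed.
Lemma e21 : (2 + 1 = 3 :> 'I_5). Proof. by apply/val_inj. Qed.
Lemma e22 : (2 + 2 = 4 :> 'I_5). Proof. by apply/val_inj. Qed.
Lemma e31 : (3 + 1 = 4 :> 'I_5). Proof. by apply/val_inj. Qed.
Lemma e32 : (3 + 2 = 0 :> 'I_5). Proof. by apply/val_inj. Qed.
Lemma e41 : (4 + 1 = 0 :> 'I_5). Proof. by apply/val_inj. Qed.
Lemma e42 : (4 + 2 = 1 :> 'I_5). Proof. by apply/val_inj. Qed.
Lemma e44 : (4 + 4 = 3 :> 'I_5). Proof. by apply/val_inj. Qed.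
Lemma e43 : (4 + 3 = 2 :> 'I_5). Proof. by apply/val_inj. Qed.
Definition eI5 := (e11, e12, e21, e22, e31, e32, e41, e42, e44, e43).
Lemma shift_eq (j a b : 'I_5) : (j + a == j + b) = (a == b).
Proof. exact: (inj_eq (addrI j)). Qed.
Lemma shift_eq0 (j a : 'I_5) : (j + a == j) = (a == 0).
Proof. by rewrite -{2}[j]addr0 shift_eq. Qed.

Section Real.
Variable R : realType.

Lemma meval_poly n (p : {mpoly R[n]}) (V : 'I_n -> {poly R}) :
  exists Q : {poly R}, forall t, p.@[fun k => (V k).[t]] = Q.[t].
Proof.
exists (\sum_(m <- msupp p) p@_m *: \prod_i (V i) ^+ m i) => t.
rewrite mevalE horner_sum; apply: eq_bigr => m _.
rewrite hornerZ horner_prod; congr (_ * _); apply: eq_bigr => i _.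
by rewrite horner_exp.
Qed.

Definition MkP (C0 C1 C2 : 'I_5 -> {poly R}) (t : R) : 'M[R]_5 :=
  Mk (fun j => (C0 j).[t]) (fun j => (C1 j).[t]) (fun j => (C2 j).[t]).

Definition polyF (F : 'M[R]_5 -> R) := forall C0 C1 C2 : 'I_5 -> {poly R},
  exists Q : {poly R}, forall t, F (MkP C0 C1 C2 t) = Q.[t].

Lemma Mk_horner C0 C1 C2 t : MkP C0 C1 C2 t = map_mx (horner^~ t) (Mk C0 C1 C2).
Proof.
apply/matrixP => i j; rewrite !mxE.
case: (i == j) => //; case: (i == j + 1) => //; case: (i == j + 2) => //.
by rewrite horner0.
Qed.

Lemma polyF_meval (p : {mpoly R[5 * 5]}) : polyF (mx_eval p).
Proof.
move=> C0 C1 C2.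
have [Q hQ] := meval_poly p (fun k => mxvec (Mk C0 C1 C2) 0 k).
exists Q => t; rewrite /mx_eval -hQ Mk_horner.
apply: meval_eq => k.
by rewrite -map_mxvec mxE.
Qed.

Lemma poly_large0 (Q : {poly R}) T : (forall t, T < t -> Q.[t] = 0) -> Q = 0.
Proof.
move=> h; apply/eqP; apply: contraT => hQ.
pose rs := [seq T + (i.+1)%:R | i <- iota 0 (size Q)].
have := @max_poly_roots _ Q rs hQ.
rewrite size_map size_iota ltnn; apply.
  apply/allP => x /mapP [i _ ->]; apply/rootP/h.
  by rewrite ltrDl ltr0Sn.
rewrite map_inj_uniq ?iota_uniq //.
by move=> i j /addrI /eqP; rewrite eqr_nat eqSS => /eqP.
Qed.

Lemma dens F : polyF F -> forall C0 C1 C2 T,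
  (forall t, T < t -> F (MkP C0 C1 C2 t) = 0) -> forall t, F (MkP C0 C1 C2 t) = 0.
Proof.
move=> hF C0 C1 C2 T h t.
have [Q hQ] := hF C0 C1 C2.
have Q0 : Q = 0 by apply: (poly_large0 (T := T)) => s hs; rewrite -hQ h.
by rewrite hQ Q0 horner0.
Qed.


Lemma eq_Mk (c0 c1 c2 c0' c1' c2' : 'I_5 -> R) :
  c0 =1 c0' -> c1 =1 c1' -> c2 =1 c2' -> Mk c0 c1 c2 = Mk c0' c1' c2'.
Proof. by move=> h0 h1 h2; apply/matrixP => i j; rewrite !mxE h0 h1 h2. Qed.

Lemma le_sum5 (f : 'I_5 -> R) j : (forall i, 0 <= f i) -> f j <= \sum_i f i.
Proof. by move=> h; rewrite (bigD1 j) //= lerDl sumr_ge0. Qed.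

Lemma Phi_all F : polyF F ->
  (forall d y z, (forall i, 0 < d i) -> (forall i, 0 < y i) -> (forall i, 0 < z i) ->
     F (Phi d y z) = 0) -> forall d y z, F (Phi d y z) = 0.
Proof.
move=> hF h d y z.
pose T := \sum_i (`|d i| + `|y i| + `|z i|).
pose sh (f : 'I_5 -> R) (k : 'I_5) : {poly R} := (f k)%:P + 'X.
have E : forall t, Phi (fun i => d i + t) (fun i => y i + t) (fun i => z i + t) =
   MkP (fun j => sh d j * sh z j) (fun j => sh d (j+1) * (sh y j + 1) * sh z j)
       (fun j => sh d (j+2) * sh y j * sh z j) t.
  by move=> t; rewrite PhiMk /MkP /sh; apply: eq_Mk => j; rewrite !hornerE.
have hT : forall (f : 'I_5 -> R) i t, `|f i| <= T -> T < t -> 0 < f i + t.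
  move=> f i t h1 h2; have := ler_norm (- f i); rewrite normrN => h3; lra.
have H : forall t, T < t -> F (MkP (fun j => sh d j * sh z j)
     (fun j => sh d (j+1) * (sh y j + 1) * sh z j) (fun j => sh d (j+2) * sh y j * sh z j) t) = 0.
  have hb : forall i, `|d i| + `|y i| + `|z i| <= T.
    move=> i; apply: (@le_sum5 (fun k => `|d k| + `|y k| + `|z k|)) => k.
    by rewrite !addr_ge0.
  move=> t ht; rewrite -E; apply: h => i; apply: hT ht; have := hb i;
  have := normr_ge0 (d i); have := normr_ge0 (y i); have := normr_ge0 (z i); lra.
have := @dens F hF _ _ _ T H 0; rewrite -E.
suff -> : Phi (fun i => d i + 0) (fun i => y i + 0) (fun i => z i + 0) = Phi d y z by [].
by rewrite !PhiMk; apply: eq_Mk => j; rewrite !addr0.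
Qed.


Definition p0 (u : 'I_5 -> R) (a0 a1 a2 : R) j := - u (j+1) * a2 - u (j+2) * a1.
Definition p1 (u : 'I_5 -> R) (a0 a1 a2 : R) j := u (j+2) * a0 - u j * a2.
Definition p2 (u : 'I_5 -> R) (a0 a1 a2 : R) j := u j * a1 + u (j+1) * a0.

Definition Psi (u a0 a1 a2 : 'I_5 -> R) : 'M[R]_5 :=
  Mk (fun j => p0 u (a0 j) (a1 j) (a2 j) j) (fun j => p1 u (a0 j) (a1 j) (a2 j) j)
     (fun j => p2 u (a0 j) (a1 j) (a2 j) j).

Lemma colv_p (u : 'I_5 -> R) (a0 a1 a2 : 'I_5 -> R) j :
  colv u (fun j => p0 u (a0 j) (a1 j) (a2 j) j) (fun j => p1 u (a0 j) (a1 j) (a2 j) j)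
     (fun j => p2 u (a0 j) (a1 j) (a2 j) j) j = 0.
Proof. rewrite /colv /p0 /p1 /p2; ring. Qed.

Definition nz (u : 'I_5 -> R) j := (u j != 0) || (u (j+1) != 0) || (u (j+2) != 0).

Definition NN (u : 'I_5 -> R) j := u j ^+ 2 + u (j+1) ^+ 2 + u (j+2) ^+ 2.
Definition A0 (u c0 c1 c2 : 'I_5 -> R) j := (c1 j * u (j+2) + c2 j * u (j+1)) / NN u j.
Definition A1 (u c0 c1 c2 : 'I_5 -> R) j := (c2 j * u j - c0 j * u (j+2)) / NN u j.
Definition A2 (u c0 c1 c2 : 'I_5 -> R) j := (- c0 j * u (j+1) - c1 j * u j) / NN u j.

Lemma sq_pos (x : R) : x != 0 -> 0 < x ^+ 2.
Proof. by move=> h; rewrite lt0r sqrf_eq0 h sqr_ge0. Qed.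

Lemma NN_neq0 u j : nz u j -> NN u j != 0.
Proof.
rewrite /nz /NN => h.
have h0 := sqr_ge0 (u j); have h1 := sqr_ge0 (u (j+1)); have h2 := sqr_ge0 (u (j+2)).
suff : 0 < u j ^+ 2 + u (j + 1) ^+ 2 + u (j + 2) ^+ 2 by move=> /gt_eqF ->.
case/orP: h => [/orP [] | ] /sq_pos; lra.
Qed.

Lemma psi_col (u c0 c1 c2 : 'I_5 -> R) j : nz u j -> colv u c0 c1 c2 j = 0 ->
  [/\ p0 u (A0 u c0 c1 c2 j) (A1 u c0 c1 c2 j) (A2 u c0 c1 c2 j) j = c0 j,
      p1 u (A0 u c0 c1 c2 j) (A1 u c0 c1 c2 j) (A2 u c0 c1 c2 j) j = c1 j &
      p2 u (A0 u c0 c1 c2 j) (A1 u c0 c1 c2 j) (A2 u c0 c1 c2 j) j = c2 j].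
Proof.
move=> /NN_neq0 hN hc; move: hN hc; rewrite /p0 /p1 /p2 /A0 /A1 /A2 /colv /NN.
move: (u j) (u (j+1)) (u (j+2)) (c0 j) (c1 j) (c2 j) => a b c x0 x1 x2 hN hc.
split.
- have -> : - b * ((- x0 * b - x1 * a) / (a ^+ 2 + b ^+ 2 + c ^+ 2)) -
      c * ((x2 * a - x0 * c) / (a ^+ 2 + b ^+ 2 + c ^+ 2)) =
      (x0 * (a ^+ 2 + b ^+ 2 + c ^+ 2) - a * (a * x0 - b * x1 + c * x2)) /
      (a ^+ 2 + b ^+ 2 + c ^+ 2) by field.
  by rewrite hc mulr0 subr0 mulfK.
- have -> : c * ((x1 * c + x2 * b) / (a ^+ 2 + b ^+ 2 + c ^+ 2)) -
      a * ((- x0 * b - x1 * a) / (a ^+ 2 + b ^+ 2 + c ^+ 2)) =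
      (x1 * (a ^+ 2 + b ^+ 2 + c ^+ 2) + b * (a * x0 - b * x1 + c * x2)) /
      (a ^+ 2 + b ^+ 2 + c ^+ 2) by field.
  by rewrite hc mulr0 addr0 mulfK.
- have -> : a * ((x2 * a - x0 * c) / (a ^+ 2 + b ^+ 2 + c ^+ 2)) +
      b * ((x1 * c + x2 * b) / (a ^+ 2 + b ^+ 2 + c ^+ 2)) =
      (x2 * (a ^+ 2 + b ^+ 2 + c ^+ 2) - c * (a * x0 - b * x1 + c * x2)) /
      (a ^+ 2 + b ^+ 2 + c ^+ 2) by field.
  by rewrite hc mulr0 subr0 mulfK.
Qed.

Lemma Mk_Psi (u c0 c1 c2 : 'I_5 -> R) : (forall j, nz u j) -> (forall j, colv u c0 c1 c2 j = 0) ->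
  Mk c0 c1 c2 = Psi u (A0 u c0 c1 c2) (A1 u c0 c1 c2) (A2 u c0 c1 c2).
Proof.
move=> hn hc; apply: eq_Mk => j; have [e0 e1 e2] := psi_col (hn j) (hc j); by [].
Qed.

Lemma Mk_Phi (u c0 c1 c2 : 'I_5 -> R) : (forall j, u j != 0) -> (forall j, c0 j != 0) ->
  (forall j, colv u c0 c1 c2 j = 0) ->
  Mk c0 c1 c2 = Phi (fun j => (u j)^-1) (fun j => u (j+2) * c2 j / (u j * c0 j))
                    (fun j => u j * c0 j).
Proof.
move=> hu hc0 hc; rewrite PhiMk; apply: eq_Mk => j /=.
- by move: (hu j) => ha; field.
- move: (hc j) (hu j) (hu (j+1)) (hc0 j); rewrite /colv.
  move: (u j) (u (j+1)) (u (j+2)) (c0 j) (c1 j) (c2 j) => a b c x0 x1 x2 h ha hb hx.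
  have -> : b^-1 * (c * x2 / (a * x0) + 1) * (a * x0) = (b * x1 + (a * x0 - b * x1 + c * x2)) / b.
    by field; rewrite hb hx ha.
  by rewrite h addr0 mulrC mulKf.
- move: (hu j) (hu (j+2)) (hc0 j) => ha hc2 hx; field; by rewrite ?ha ?hc2 ?hx.
Qed.


Lemma Psi_all F : polyF F ->
  (forall d y z, (forall i, 0 < d i) -> (forall i, 0 < y i) -> (forall i, 0 < z i) ->
     F (Phi d y z) = 0) -> forall u a0 a1 a2, F (Psi u a0 a1 a2) = 0.
Proof.
move=> hF h u a0 a1 a2.
have hPhi := Phi_all hF h.
pose T := \sum_i (`|u i| + `|a1 i| + `|a2 i|).
pose sh (f : 'I_5 -> R) (k : 'I_5) : {poly R} := (f k)%:P + 'X.
pose C0 := fun j => - sh u (j+1) * sh a2 j - sh u (j+2) * sh a1 j.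
pose C1 := fun j => sh u (j+2) * sh a0 j - sh u j * sh a2 j.
pose C2 := fun j => sh u j * sh a1 j + sh u (j+1) * sh a0 j.
have E : forall t, Psi (fun i => u i + t) (fun i => a0 i + t) (fun i => a1 i + t)
   (fun i => a2 i + t) = MkP C0 C1 C2 t.
  by move=> t; rewrite /MkP /Psi /C0 /C1 /C2 /sh /p0 /p1 /p2; apply: eq_Mk => j; rewrite !hornerE.
have hT : forall (f : 'I_5 -> R) i t, `|f i| <= T -> T < t -> 0 < f i + t.
  move=> f i t h1 h2; have := ler_norm (- f i); rewrite normrN => h3; lra.
have H : forall t, T < t -> F (MkP C0 C1 C2 t) = 0.
  have hb : forall i, `|u i| + `|a1 i| + `|a2 i| <= T.
    move=> i; apply: (@le_sum5 (fun k => `|u k| + `|a1 k| + `|a2 k|)) => k.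
    by rewrite !addr_ge0.
  have hu : forall i t, T < t -> 0 < u i + t.
    move=> i t ht; apply: hT ht; have := hb i;
    have := normr_ge0 (a1 i); have := normr_ge0 (a2 i); lra.
  have ha1 : forall i t, T < t -> 0 < a1 i + t.
    move=> i t ht; apply: hT ht; have := hb i;
    have := normr_ge0 (u i); have := normr_ge0 (a2 i); lra.
  have ha2 : forall i t, T < t -> 0 < a2 i + t.
    move=> i t ht; apply: hT ht; have := hb i;
    have := normr_ge0 (a1 i); have := normr_ge0 (u i); lra.
  move=> t ht; rewrite -E /Psi (@Mk_Phi (fun i => u i + t)) ?hPhi //.
  - by move=> j; rewrite gt_eqF // hu.
  - move=> j; rewrite lt_eqF // /p0.
    have := mulr_gt0 (hu (j+1) t ht) (ha2 j t ht).
    have := mulr_gt0 (hu (j+2) t ht) (ha1 j t ht); lra.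
  - by move=> j; apply: colv_p.
have := @dens F hF _ _ _ T H 0; rewrite -E.
suff -> : Psi (fun i => u i + 0) (fun i => a0 i + 0) (fun i => a1 i + 0) (fun i => a2 i + 0)
   = Psi u a0 a1 a2 by [].
by apply: eq_Mk => j; rewrite /p0 /p1 /p2 !addr0.
Qed.


Definition hPos (F : 'M[R]_5 -> R) := forall d y z, (forall i, 0 < d i) ->
  (forall i, 0 < y i) -> (forall i, 0 < z i) -> F (Phi d y z) = 0.

Lemma good_case F : polyF F -> hPos F -> forall u c0 c1 c2 : 'I_5 -> R,
  (forall j, nz u j) -> (forall j, colv u c0 c1 c2 j = 0) -> F (Mk c0 c1 c2) = 0.
Proof. by move=> hF hP u c0 c1 c2 hn hc; rewrite (Mk_Psi hn hc) (Psi_all hF hP). Qed.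

Lemma ne_line (u w : 'I_5 -> R) t k : \sum_i `|u i / w i| < t ->
  (u k != 0) || (w k != 0) -> u k + w k * t != 0.
Proof.
move=> ht; have [/eqP -> | hw] := boolP (w k == 0).
  by rewrite orbF mul0r addr0.
move=> _; apply/eqP => he.
have et : t = - (u k / w k) by apply: (mulfI hw); rewrite mulrN mulrCA divff // mulr1; lra.
have hb : `|u k / w k| <= \sum_i `|u i / w i|.
  by apply: (@le_sum5 (fun i => `|u i / w i|)) => i.
have := ler_norm (- (u k / w k)); rewrite normrN -et; lra.
Qed.


Lemma bad_nice F : polyF F -> hPos F -> forall (u c0 c1 c2 : 'I_5 -> R) j,
  u j = 0 -> u (j+1) = 0 -> u (j+2) = 0 -> u (j+4) != 0 -> c0 j != 0 ->
  (u (j+3) = 0 -> c2 (j+1) != 0) -> (forall i, colv u c0 c1 c2 i = 0) ->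
  F (Mk c0 c1 c2) = 0.
Proof.
move=> hF hP u c0 c1 c2 j hu0 hu1 hu2 hu4 hc0 hc2 hc.
pose be := if u (j+3) == 0 then - c0 (j+1) / c2 (j+1) else 0.
pose w := fun i : 'I_5 => if i == j then c1 j / c0 j else if i == j+1 then 1
   else if i == j+3 then be else 0.
have wj : w j = c1 j / c0 j by rewrite /w eqxx.
have wj1 : w (j+1) = 1 by rewrite /w shift_eq0 eqxx.
have wj2 : w (j+2) = 0 by rewrite /w shift_eq0 !shift_eq.
have wj3 : w (j+3) = be by rewrite /w shift_eq0 !shift_eq.
pose a0 := A0 u c0 c1 c2; pose a1 := A1 u c0 c1 c2; pose a2 := A2 u c0 c1 c2.
pose uP := fun k => (u k)%:P + (w k)%:P * 'X.
pose C0 := fun i => if nz u i then - uP (i+1) * (a2 i)%:P - uP (i+2) * (a1 i)%:P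
                    else (c0 i)%:P.
pose C1 := fun i => if nz u i then uP (i+2) * (a0 i)%:P - uP i * (a2 i)%:P
                    else (c1 i)%:P.
pose C2 := fun i => if nz u i then uP i * (a1 i)%:P + uP (i+1) * (a0 i)%:P
                    else (c2 i)%:P.
pose ut := fun (t : R) k => u k + w k * t.
have Ev : forall t, MkP C0 C1 C2 t =
  Mk (fun i => if nz u i then p0 (ut t) (a0 i) (a1 i) (a2 i) i else c0 i)
     (fun i => if nz u i then p1 (ut t) (a0 i) (a1 i) (a2 i) i else c1 i)
     (fun i => if nz u i then p2 (ut t) (a0 i) (a1 i) (a2 i) i else c2 i).
  move=> t; apply: eq_Mk => i; rewrite /C0 /C1 /C2;
  by case: (nz u i); rewrite /p0 /p1 /p2 /ut /uP !hornerE.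
have H : forall t, \sum_i `|u i / w i| < t -> F (MkP C0 C1 C2 t) = 0.
  move=> t ht; rewrite Ev; apply: (good_case hF hP (u := ut t)).
  - have hne : forall k, (u k != 0) || (w k != 0) -> ut t k != 0.
      by move=> k hk; apply: ne_line.
    move=> i; have [k ->] := cover5 j i; rewrite /nz.
    case: (I5_cases k) => [->|[->|[->|[->|->]]]]; rewrite -?addrA ?eI5 ?addr0 ?add0r.
    + by rewrite (hne (j+1)) ?orbT // wj1 oner_eq0 orbT.
    + by rewrite (hne (j+1)) ?orbT // wj1 oner_eq0 orbT.
    + by rewrite (hne (j+4)) ?orbT // hu4.
    + by rewrite (hne (j+4)) ?orbT // hu4.
    + by rewrite (hne (j+4)) ?orbT // hu4.
  - move=> i; rewrite /colv; case E: (nz u i).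
      by rewrite /p0 /p1 /p2; ring.
    move: E; have [k ->] := cover5 j i; rewrite /nz.
    case: (I5_cases k) => [->|[->|[->|[->|->]]]]; rewrite -?addrA ?eI5 ?addr0 ?add0r.
    + rewrite /ut hu0 hu1 hu2 wj wj1 wj2 => _; by field.
    + rewrite hu1 hu2 /ut hu1 hu2 wj1 wj2 wj3 eqxx /= => /negbT; rewrite negbK => /eqP h3.
      rewrite h3 /be h3 eqxx; have := hc2 h3 => hc2'; by field.
    + by rewrite hu4 ?orbT.
    + by rewrite hu4 ?orbT.
    + by rewrite hu4.
have := dens hF H 0; rewrite Ev.
suff -> : Mk (fun i => if nz u i then p0 (ut 0) (a0 i) (a1 i) (a2 i) i else c0 i)
     (fun i => if nz u i then p1 (ut 0) (a0 i) (a1 i) (a2 i) i else c1 i)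
     (fun i => if nz u i then p2 (ut 0) (a0 i) (a1 i) (a2 i) i else c2 i) = Mk c0 c1 c2 by [].
apply: eq_Mk => i; case E: (nz u i) => //;
  have [e0 e1 e2] := psi_col E (hc i); rewrite /p0 /p1 /p2 /ut !mulr0 !addr0;
  by [rewrite -e0 | rewrite -e1 | rewrite -e2].
Qed.


Lemma bad_any F : polyF F -> hPos F -> forall (u c0 c1 c2 : 'I_5 -> R) j,
  u j = 0 -> u (j+1) = 0 -> u (j+2) = 0 -> u (j+4) != 0 ->
  (forall i, colv u c0 c1 c2 i = 0) -> F (Mk c0 c1 c2) = 0.
Proof.
move=> hF hP u c0 c1 c2 j hu0 hu1 hu2 hu4 hc.
pose b3 := (u (j+3) == 0).
pose C0 := fun i => (c0 i)%:P + (if i == j then 'X else 0).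
pose C1 := fun i => (c1 i)%:P.
pose C2 := fun i => (c2 i)%:P + (if b3 && (i == j+1) then 'X else 0).
have Ev : forall t, MkP C0 C1 C2 t = Mk (fun i => c0 i + (if i == j then t else 0)) c1
   (fun i => c2 i + (if b3 && (i == j+1) then t else 0)).
  move=> t; apply: eq_Mk => i; rewrite /C0 /C1 /C2 ?hornerE //;
  by case: ifP => _; rewrite !hornerE.
have H : forall t, `|c0 j| + `|c2 (j+1)| < t -> F (MkP C0 C1 C2 t) = 0.
  move=> t ht; rewrite Ev; apply: (bad_nice hF hP (j:=j) hu0 hu1 hu2 hu4).
  - rewrite eqxx; move: (ler_norm (- c0 j)) (normr_ge0 (c2 (j+1))).
    rewrite normrN => h1 h2; apply/eqP => h3; lra.
  - move=> h3; rewrite /b3 h3 eqxx /= eqxx.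
    move: (ler_norm (- c2 (j+1))) (normr_ge0 (c0 j)).
    rewrite normrN => h1 h2; apply/eqP => h4; lra.
  - move=> i; move: (hc i); rewrite /colv.
    have z1 : u i * (if i == j then t else 0) = 0.
      by case: eqP => [->|_]; rewrite ?hu0 ?mul0r ?mulr0.
    have z2 : u (i+2) * (if b3 && (i == j+1) then t else 0) = 0.
      case: ifP => [/andP [/eqP h3 /eqP ->]|_]; rewrite ?mulr0 //.
      by rewrite -addrA e12 h3 mul0r.
    by move=> h; rewrite !mulrDr z1 z2 !addr0.
have := dens hF H 0; rewrite Ev.
suff -> : Mk (fun i => c0 i + (if i == j then 0 else 0)) c1
   (fun i => c2 i + (if b3 && (i == j+1) then 0 else 0)) = Mk c0 c1 c2 by [].
by apply: eq_Mk => i //=; case: ifP => _; rewrite addr0.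
Qed.

Lemma core F : polyF F -> hPos F -> forall (u c0 c1 c2 : 'I_5 -> R),
  (exists k, u k != 0) -> (forall i, colv u c0 c1 c2 i = 0) -> F (Mk c0 c1 c2) = 0.
Proof.
move=> hF hP u c0 c1 c2 [k hk] hc.
have [hn | ] := boolP [forall i, nz u i].
  by apply: (good_case hF hP (u := u)) hc => i; exact: (forallP hn i).
rewrite negb_forall => /existsP [i0].
rewrite /nz !negb_or !negbK => /andP [/andP [/eqP z0 /eqP z1] /eqP z2].
have [h4 | /negbNE/eqP z4] := boolP (u (i0 + 4) != 0).
  exact: (bad_any hF hP (j := i0) z0 z1 z2 h4 hc).
have [h3 | /negbNE/eqP z3] := boolP (u (i0 + 3) != 0).
  apply: (bad_any hF hP (j := i0 + 4)) hc.
  - exact z4.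
  - by rewrite -addrA e41 addr0.
  - by rewrite -addrA e42.
  - by rewrite -addrA e44.
exfalso; move: hk; have [m ->] := cover5 i0 k.
by case: (I5_cases m) => [->|[->|[->|[->|->]]]]; rewrite ?addr0 ?z0 ?z1 ?z2 ?z3 ?z4 eqxx.
Qed.

End Real.

Definition ps {R : comNzRingType} : {mpoly R[5 * 5]} :=
  \det (\matrix_(i, j) ((Horn i j : R)%:MP * 'X_(mxvec_index i j))).

Lemma ps_eval {R : comNzRingType} (Y : 'M[R]_5) : mx_eval ps Y = s_Horn Y.
Proof.
rewrite /mx_eval /ps -det_map_mx /s_Horn; congr (\det _).
by move: (@Horn R) => H; apply/matrixP => i j; rewrite !mxE rmorphM /= mevalC mevalXU mxvecE.
Qed.

Lemma sHorn_Phi (R : realType) (d y z : 'I_5 -> R) : (forall i, 0 < d i) ->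
  s_Horn (Phi d y z) = 0.
Proof.
move=> hd; rewrite /s_Horn PhiMk; apply/eqP/det0P; exists (\row_i (d i)^-1).
  apply/eqP => /matrixP/(_ 0 0); rewrite !mxE => /eqP; rewrite invr_eq0.
  by rewrite gt_eqF // hd.
apply/matrixP => i j; rewrite ord1 colMk mxE /colv !mxE.
have h0 := hd j; have h1 := hd (j+1); have h2 := hd (j+2).
by field; rewrite !gt_eqF.
Qed.

Theorem theorem2p7 (R : realType) (X : 'M[R]_5) :
  zariski_closure_in_W (@Z_Horn R) X <-> (inW X /\ s_Horn X = 0).
Proof.
split.
  move=> [hW hp]; split => //; rewrite -ps_eval; apply: hp.
  by move=> Y [d [y [z [hd hy hz ->]]]]; rewrite ps_eval; apply: sHorn_Phi.
move=> [hW hs]; split => // p hp.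
have hF := polyF_meval p.
have hP : hPos (mx_eval p).
  by move=> d y z hd hy hz; apply: hp; exists d, y, z; split.
move/eqP/det0P: hs => [v hv0 hv].
rewrite (inW_Mk hW) in hv *.
apply: (core hF hP (u := fun i => v 0 i)).
  case: (pickP (fun k => v 0 k != 0)) => [k hk | h0]; first by exists k.
  exfalso; move/eqP: hv0; apply; apply/matrixP => i k; rewrite ord1 mxE.
  by move/negbFE/eqP: (h0 k).
by move=> i; rewrite -colMk hv mxE.
Qed.
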